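(* Let $q\ge2$, $r\ge1$, $\rho\ge2$, $s\ge1$ be integers, $N=r+\rho-1$, $n=sN$, and $\mathcal{R}_{t+1}=\{tN+1,\dots,(t+1)N\}$ for $t=0,\dots,s-1$. Let $\mathcal{C}\subseteq Q^n$ ($|Q|=q$) be a code of cardinality $q^k$ with minimum distance $d$ such that $\mathcal{C}|_{\mathcal{R}_i}$ has minimum distance at least $\rho$ for all $i=1,\dots,s$. Write $d=tN+\partial$ with integers $t\ge0$ and $1\le\partial\le N$. Then $$k\le\begin{cases} r(s-t)+\rho-\partial & \text{if } \rho\le\partial,\\ r(s-t) & \text{if } \rho>\partial.\end{cases}$$
   Context: Minimum distance refers to Hamming distance; $\mathcal{C}|_{\mathcal{R}_i}$ is the projection of $\mathcal{C}$ onto the coordinates in $\mathcal{R}_i$. *)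

(* Defs.v *)
From mathcomp Require Import all_boot.
Set Implicit Arguments. Unset Strict Implicit. Unset Printing Implicit Defensive.

(* Words of length n over alphabet Q are finite functions 'I_n -> Q
   (coordinates are 0-based: coordinate j here is coordinate j+1 of the paper). *)

Definition hdist (Q : finType) (n : nat) (x y : {ffun 'I_n -> Q}) : nat :=
  #|[set j : 'I_n | x j != y j]|.

Definition hdist_on (Q : finType) (n : nat) (R : {set 'I_n})
    (x y : {ffun 'I_n -> Q}) : nat :=
  #|[set j in R | x j != y j]|.

Definition min_dist (Q : finType) (n : nat) (C : {set {ffun 'I_n -> Q}}) (d : nat) : Prop :=
  (exists x y, [/\ x \in C, y \in C, x != y & hdist x y = d]) /\
  (forall x y, x \in C -> y \in C -> x != y -> d <= hdist x y).

Definition proj_min_dist_ge (Q : finType) (n : nat) (C : {set {ffun 'I_n -> Q}})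
    (R : {set 'I_n}) (rho : nat) : Prop :=
  forall x y, x \in C -> y \in C -> 0 < hdist_on R x y -> rho <= hdist_on R x y.

(* The block R_{i+1} = {iN+1, ..., (i+1)N} (1-based), i.e. {iN, ..., (i+1)N - 1} 0-based *)
Definition block (n N i : nat) : {set 'I_n} :=
  [set j : 'I_n | (i * N <= j) && (j < i.+1 * N)].

(* Main.v *)
Require Import Defs.
From mathcomp Require Import all_boot.
From mathcomp Require Import zify.

Set Implicit Arguments. Unset Strict Implicit. Unset Printing Implicit Defensive.

Definition restr (Q : finType) n (S : {set 'I_n}) (x : {ffun 'I_n -> Q}) :
  {ffun 'I_n -> option Q} := [ffun j => if j \in S then Some (x j) else None].

Definition cut (Q : finType) n (S : {set 'I_n}) (z : {ffun 'I_n -> option Q}) :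
  {ffun 'I_n -> option Q} := [ffun j => if j \in S then z j else None].

Definition Iv n (a b : nat) : {set 'I_n} := [set j : 'I_n | (a <= j) && (j < b)].

Lemma cut_restr (Q : finType) n (S T : {set 'I_n}) (x : {ffun 'I_n -> Q}) :
  S \subset T -> cut S (restr T x) = restr S x.
Proof.
move=> ST; apply/ffunP => j; rewrite !ffunE.
case: ifP => // jS; by rewrite (subsetP ST j jS).
Qed.

Lemma restr_sub (Q : finType) n (S T : {set 'I_n}) (C : {set {ffun 'I_n -> Q}}) :
  S \subset T -> #|restr S @: C| <= #|restr T @: C|.
Proof.
move=> ST.
have -> : restr S @: C = cut S @: (restr T @: C).
  by rewrite -imset_comp; apply: eq_imset => x /=; rewrite cut_restr.
exact: leq_imset_card.
Qed.

Lemma restrU (Q : finType) n (A B : {set 'I_n}) (C : {set {ffun 'I_n -> Q}}) :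
  #|restr (A :|: B) @: C| <= #|restr A @: C| * #|restr B @: C|.
Proof.
rewrite -cardsX.
pose h := fun z : {ffun 'I_n -> option Q} => (cut A z, cut B z).
rewrite -(@card_in_imset _ _ h).
  apply: subset_leq_card; apply/subsetP => p /imsetP [z /imsetP [x xC ->] ->].
  rewrite in_setX /h !cut_restr ?subsetUl ?subsetUr //.
  by rewrite !imset_f.
move=> z1 z2 /imsetP[x1 _ ->] /imsetP[x2 _ ->] [].
rewrite !cut_restr ?subsetUl ?subsetUr // => e1 e2.
apply/ffunP => j; rewrite !ffunE in_setU.
case: (boolP (j \in A)) => jA /=.
  by have := congr1 (fun f : {ffun 'I_n -> option Q} => f j) e1; rewrite !ffunE jA.
case: (boolP (j \in B)) => jB //=.
by have := congr1 (fun f : {ffun 'I_n -> option Q} => f j) e2; rewrite !ffunE jB.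
Qed.

Lemma restr0 (Q : finType) n (C : {set {ffun 'I_n -> Q}}) :
  #|restr set0 @: C| <= 1.
Proof.
rewrite -(cards1 ([ffun => None] : {ffun 'I_n -> option Q})).
apply: subset_leq_card; apply/subsetP => z /imsetP[x _ ->].
rewrite inE; apply/eqP/ffunP => j; by rewrite !ffunE inE.
Qed.

Lemma restr1 (Q : finType) n (C : {set {ffun 'I_n -> Q}}) j :
  #|restr [set j] @: C| <= #|Q|.
Proof.
pose g := fun a : Q => ([ffun k => if k \in [set j] then Some a else None]
   : {ffun 'I_n -> option Q}).
have -> : restr [set j] @: C = g @: ((fun x : {ffun 'I_n -> Q} => x j) @: C).
  rewrite -imset_comp; apply: eq_imset => x /=.
  apply/ffunP => k; rewrite !ffunE inE; case: eqP => // ->; done.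
apply: leq_trans (leq_imset_card _ _) _; exact: max_card.
Qed.

Lemma restr_card (Q : finType) n (C : {set {ffun 'I_n -> Q}}) (S : {set 'I_n}) :
  #|restr S @: C| <= #|Q| ^ #|S|.
Proof.
have [k cS] : exists k, #|S| = k by eauto.
rewrite cS; elim: k S cS => [|k IH] S cS.
  by move/eqP: cS; rewrite cards_eq0 => /eqP ->; apply: restr0.
have : S != set0 by rewrite -card_gt0 cS.
case/set0Pn => j jS.
rewrite -(setD1K jS) expnS.
apply: leq_trans (restrU _ _ _) _.
apply: leq_mul; first exact: restr1.
apply: IH; move: cS; rewrite (cardsD1 j S) jS; lia.
Qed.

Lemma Iv_card n a b : #|@Iv n a b| <= b - a.
Proof.
rewrite cardE -(size_map val) -(size_iota a (b - a)).
apply: uniq_leq_size; first by rewrite map_inj_uniq ?enum_uniq //; apply: val_inj.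
move=> x /mapP [j]; rewrite mem_enum inE => /andP[h1 h2] ->; rewrite mem_iota /=; lia.
Qed.

Lemma block_bound (Q : finType) n (C : {set {ffun 'I_n -> Q}}) a b r rho :
  1 <= rho -> b = a + r + rho - 1 -> 0 < #|Q| ->
  (forall x y, x \in C -> y \in C -> 0 < hdist_on (Iv n a b) x y ->
     rho <= hdist_on (Iv n a b) x y) ->
  #|restr (Iv n a b) @: C| <= #|Q| ^ r.
Proof.
move=> rho1 eb Q0 H.
set B := Iv n a b; set K := Iv n a (a + r).
have KB : K \subset B by apply/subsetP => j; rewrite !inE; lia.
rewrite -(@card_in_imset _ _ (cut K)).
  rewrite -imset_comp (eq_imset (g := restr K)); last by move=> x /=; rewrite cut_restr.
  apply: leq_trans (restr_card _ _) _; apply: leq_pexp2l => //.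
  by apply: leq_trans (Iv_card _ _ _) _; lia.
move=> z1 z2 /imsetP[x xC ->] /imsetP[y yC ->].
rewrite !cut_restr // => eK.
case E: (hdist_on B x y) => [|m].
  move/eqP: E; rewrite cards_eq0 => /eqP E.
  apply/ffunP => j; rewrite !ffunE; case: ifP => // jB.
  case: (x j =P y j) => [->|/eqP ne] //.
  have : j \in [set j in B | x j != y j] by rewrite inE jB ne.
  by rewrite E inE.
have := H x y xC yC; rewrite E => /(_ isT) hr.
have : m.+1 <= rho - 1.
  rewrite -E; apply: leq_trans (_ : #|Iv n (a + r) b| <= _); last first.
    by apply: leq_trans (Iv_card _ _ _) _; lia.
  apply: subset_leq_card; apply/subsetP => j; rewrite !inE => /andP[/andP[h1 h2] ne].
  rewrite h2 andbT.
  case: (leqP (a + r) j) => // lt.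
  have : j \in K by rewrite inE h1 lt.
  move=> jK; have := congr1 (fun f : {ffun 'I_n -> option Q} => f j) eK; rewrite !ffunE jK => [[e]].
  by rewrite e eqxx in ne.
lia.
Qed.

Theorem mainTheorem7 (q r rho s : nat) (Q : finType)
    (C : {set {ffun 'I_(s * (r + rho - 1)) -> Q}}) (d t del : nat) :
  2 <= q -> 1 <= r -> 2 <= rho -> 1 <= s ->
  #|Q| = q ->
  min_dist C d ->
  (forall i, i < s -> proj_min_dist_ge C (block (s * (r + rho - 1)) (r + rho - 1) i) rho) ->
  d = t * (r + rho - 1) + del -> 1 <= del -> del <= r + rho - 1 ->
  #|C| <= q ^ (if rho <= del then r * (s - t) + rho - del else r * (s - t)).
Proof.
move=> q2 r1 rho2 s1 cQ [[x0 [y0 [x0C y0C ne0 hd0]]] md] hproj ed del1 delN.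
set N := r + rho - 1 in ed delN *.
set n := s * N.
have Q0 : 0 < #|Q| by rewrite cQ; lia.
have dn : d <= n.
  by rewrite -hd0 /hdist; apply: leq_trans (max_card _) _; rewrite card_ord.
have ts : t < s.
  rewrite ltnNge; apply/negP => st.
  have : s * N <= t * N by rewrite leq_mul2r st orbT.
  rewrite -/n; lia.
have [m em] : exists m, s = t + m.+1 by exists (s - t - 1); lia.
have est : s - t = m.+1 by lia.
have nE : n = t * N + m * N + N by rewrite /n em mulnDl mulSn; lia.
have blk : forall k, k < s -> #|restr (Iv n (k * N) (k.+1 * N)) @: C| <= q ^ r.
  move=> k ks; rewrite -cQ; apply: (block_bound (rho := rho)) => //; first lia.
    rewrite mulSn; move: (k * N) => u; rewrite /N; lia.
  exact: hproj.
have pre : forall k, k <= s -> #|restr (Iv n 0 (k * N)) @: C| <= q ^ (r * k).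
  elim=> [|k IH] ks.
    apply: leq_trans (restr_card _ _) _; rewrite cQ muln0 expn0.
    by rewrite -(expn0 q) leq_pexp2l ?(leq_trans (Iv_card _ _ _)) //; lia.
  have -> : Iv n 0 (k.+1 * N) = Iv n 0 (k * N) :|: Iv n (k * N) (k.+1 * N).
    by apply/setP => j; rewrite !inE mulSn; lia.
  apply: leq_trans (restrU _ _ _) _.
  rewrite mulnS addnC expnD; apply: leq_mul; first by apply: IH; lia.
  by apply: blk; lia.
set U := Iv n 0 (m * N + (N - del + 1)).
have cU : #|C| = #|restr U @: C|.
  rewrite card_in_imset // => x y xC yC eU.
  apply/eqP; apply: contraT => nxy.
  have := md x y xC yC nxy.
  have : hdist x y <= #|Iv n (m * N + (N - del + 1)) n|.
    apply: subset_leq_card; apply/subsetP => j; rewrite !inE => ne.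
    rewrite ltn_ord andbT leqNgt; apply/negP => lt.
    have := congr1 (fun f : {ffun 'I_n -> option Q} => f j) eU.
    rewrite !ffunE inE lt /= => [[e]]; by rewrite e eqxx in ne.
  have := Iv_card n (m * N + (N - del + 1)) n.
  have ar : n - (m * N + (N - del + 1)) < d.
    rewrite nE ed; move: delN del1; clear; move: (t * N) (m * N) => u v; lia.
  move: ar; move: (n - _) (#|Iv _ _ _|) (hdist x y) => a b c; lia.
rewrite cU.
have -> : U = Iv n 0 (m * N) :|: Iv n (m * N) (m * N + (N - del + 1)).
  by apply/setP => j; rewrite !inE; lia.
apply: leq_trans (restrU _ _ _) _.
have h1 := pre m ltac:(lia).
case: ifP => hrd.
  have h2 : #|restr (Iv n (m * N) (m * N + (N - del + 1))) @: C| <= q ^ (r + rho - del).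
    apply: leq_trans (restr_card _ _) _; rewrite cQ leq_exp2l //.
    by apply: leq_trans (Iv_card _ _ _) _; rewrite /N; lia.
  apply: leq_trans (leq_mul h1 h2) _; rewrite -expnD leq_exp2l //; lia.
have h2 : #|restr (Iv n (m * N) (m * N + (N - del + 1))) @: C| <= q ^ r.
  apply: leq_trans (restr_sub _ _) (blk m _); last lia.
  by apply/subsetP => j; rewrite !inE mulSn; lia.
apply: leq_trans (leq_mul h1 h2) _; rewrite -expnD leq_exp2l //; lia.
Qed.
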